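(* Let $\mathcal{G}^s$ be an SCG, consider the effect $P(y_t\mid \text{do}(x^1_{t-\gamma_1}),\dots,\text{do}(x^n_{t-\gamma_n}))$, let $F\in\mathcal{V}^s$ and fix an intervention $X^i_{t-\gamma_i}$. The following are equivalent: 1. There exists $t_f\in\mathbb{Z}$ such that $F_{t_f}$ is both $X^i_{t-\gamma_i}$-$\mathcal{NC}$-accessible and $Y_t$-$\mathcal{NC}$-accessible. 2. $t_{\mathcal{NC}}(F)\le t^{\mathcal{NC}}_{X^i_{t-\gamma_i}}(F)$ and $t_{\mathcal{NC}}(F)\le t^{\mathcal{NC}}_{Y_t}(F)$.
   Context: Let $\mathcal{V}$ be a finite set of time series, $\mathcal{V}^f=\{X_s: X\in\mathcal{V},s\in\mathbb{Z}\}$. An FTCG is a DAG on $\mathcal{V}^f$ whose edges $X_s\to Z_{s'}$ satisfy $s\le s'$. The SCG reduced from an FTCG $\mathcal{G}^f$ is $\mathcal{G}^s=(\mathcal{V}^s,\mathcal{E}^s)$, $\mathcal{V}^s=\mathcal{V}$, with $X\to Z$ iff $\mathcal{G}^f$ has an edge $X_{s-\gamma}\to Z_s$ with $\gamma\ge0$. An SCG is a graph reduced from some FTCG; $\mathcal{C}(\mathcal{G}^s)$ is the class of candidate FTCGs (those from which $\mathcal{G}^s$ is reduced). Descendants are via directed paths (a vertex is its own descendant). A path from set $\mathbf{A}$ to $\mathbf{B}$ is proper if only its first vertex is in $\mathbf{A}$. $\text{Forb}(\mathbf{X},\mathbf{Y},\mathcal{G})$: all descendants of any $W\notin\mathbf{X}$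 on a proper directed path from $\mathbf{X}$ to $\mathbf{Y}$. Effect setup: fix $Y\in\mathcal{V}^s$, time $t$, interventions $X^1_{t-\gamma_1},\dots,X^n_{t-\gamma_n}$ (distinct vertices of $\mathcal{V}^f$) with $\gamma_i\ge0$ and $Y$ a descendant of every $X^i$ in $\mathcal{G}^s$. $\mathcal{X}^f=\{X^i_{t-\gamma_i}\}_i$. $\mathcal{CF}=\bigcup_{\mathcal{G}^f\in\mathcal{C}(\mathcal{G}^s)}\text{Forb}(\mathcal{X}^f,Y_t,\mathcal{G}^f)$, $\mathcal{NC}=\mathcal{CF}\setminus\mathcal{X}^f$, $t_{\mathcal{NC}}(F)=\min\{t_1:F_{t_1}\in\mathcal{NC}\}$ ($\min\emptyset=+\infty$). For $V_{t_v}\in\mathcal{V}^f$, $F_{t_1}\in\mathcal{V}^f\setminus\{V_{t_v}\}$ is $V_{t_v}$-$\mathcal{NC}$-accessible if some candidate FTCG contains a directed path from $F_{t_1}$ to $V_{t_v}$ all of whose vertices except possibly $V_{t_v}$ lie in $\mathcal{NC}$; $t^{\mathcal{NC}}_{V_{t_v}}(F)=\max\{t_1: F_{t_1}\text{ is }V_{t_v}\text{-}\mathcal{NC}\text{-accessible}\}$ ($\max\emptyset=-\infty$). *)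

(* Defs.v *)
From Stdlib Require Import ZArith ClassicalEpsilon.
From Stdlib Require List.
From mathcomp Require Import all_boot.
Set Implicit Arguments. Unset Strict Implicit. Unset Printing Implicit Defensive.

Inductive extZ := NegInf | Fin (z : Z) | PosInf.

Definition extZ_le (a b : extZ) : Prop :=
  match a, b with
  | NegInf, _ => True
  | _, PosInf => True
  | Fin x, Fin y => (x <= y)%Z
  | _, _ => False
  end.

(** min of a set of integers, with min ∅ = +oo
    (and -oo for a nonempty set without least element, i.e. its infimum). *)
Definition ext_min (P : Z -> Prop) : extZ :=
  match excluded_middle_informative
          (exists z, P z /\ forall w, P w -> (z <= w)%Z) with
  | left H => Fin (proj1_sig (constructive_indefinite_description _ H))
  | right _ => if excluded_middle_informative (exists z, P z)
               then NegInf else PosInf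
  end.

(** max of a set of integers, with max ∅ = -oo (+oo if unbounded above). *)
Definition ext_max (P : Z -> Prop) : extZ :=
  match excluded_middle_informative
          (exists z, P z /\ forall w, P w -> (w <= z)%Z) with
  | left H => Fin (proj1_sig (constructive_indefinite_description _ H))
  | right _ => if excluded_middle_informative (exists z, P z)
               then PosInf else NegInf
  end.

(** Directed walks: [chain E x l] says x :: l is a directed path in E. *)
Fixpoint chain {T : Type} (E : T -> T -> Prop) (x : T) (l : list T) : Prop :=
  match l with
  | nil => True
  | y :: l' => E x y /\ chain E y l'
  end.

(** b is a descendant of a (reflexive: every vertex is its own descendant). *)
Definition descendant {T : Type} (E : T -> T -> Prop) (a b : T) : Prop :=
  exists l, chain E a l /\ last a l = b.

Definition acyclic {T : Type} (E : T -> T -> Prop) : Prop :=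
  forall x l, chain E x l -> l <> nil -> last x l <> x.

(** Vertices of the full-time graph: X_s is (X, s). *)
Definition vtx (V : finType) := (V * Z)%type.

Definition is_FTCG (V : finType) (E : vtx V -> vtx V -> Prop) : Prop :=
  (forall X s W s', E (X, s) (W, s') -> (s <= s')%Z) /\ acyclic E.

Definition reduces (V : finType) (E : vtx V -> vtx V -> Prop)
  (Gs : V -> V -> Prop) : Prop :=
  forall X W : V, Gs X W <->
    exists (s g : Z), (0 <= g)%Z /\ E (X, (s - g)%Z) (W, s).

Definition is_SCG (V : finType) (Gs : V -> V -> Prop) : Prop :=
  exists E, is_FTCG E /\ reduces E Gs.

Definition candidate (V : finType) (Gs : V -> V -> Prop)
  (E : vtx V -> vtx V -> Prop) : Prop :=
  is_FTCG E /\ reduces E Gs.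

Definition on_proper_path {T : Type} (E : T -> T -> Prop) (A : T -> Prop)
  (b w : T) : Prop :=
  exists a l, A a /\ chain E a l /\ last a l = b /\
    (forall v, List.In v l -> ~ A v) /\ List.In w (a :: l).

Definition Forb {T : Type} (E : T -> T -> Prop) (A : T -> Prop) (b : T)
  : T -> Prop :=
  fun v => exists w, ~ A w /\ on_proper_path E A b w /\ descendant E w v.

Definition interv (V : finType) (n : nat) (Xv : 'I_n -> V) (gam : 'I_n -> nat)
  (t : Z) (i : 'I_n) : vtx V := (Xv i, (t - Z.of_nat (gam i))%Z).

Definition Xf (V : finType) (n : nat) (Xv : 'I_n -> V) (gam : 'I_n -> nat)
  (t : Z) : vtx V -> Prop :=
  fun v => exists i, v = interv Xv gam t i.

Definition CF (V : finType) (Gs : V -> V -> Prop) (n : nat) (Xv : 'I_n -> V)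
  (gam : 'I_n -> nat) (Y : V) (t : Z) : vtx V -> Prop :=
  fun v => exists E, candidate Gs E /\ Forb E (Xf Xv gam t) (Y, t) v.

Definition NC (V : finType) (Gs : V -> V -> Prop) (n : nat) (Xv : 'I_n -> V)
  (gam : 'I_n -> nat) (Y : V) (t : Z) : vtx V -> Prop :=
  fun v => CF Gs Xv gam Y t v /\ ~ Xf Xv gam t v.

Definition t_NC (V : finType) (Gs : V -> V -> Prop) (n : nat) (Xv : 'I_n -> V)
  (gam : 'I_n -> nat) (Y : V) (t : Z) (F : V) : extZ :=
  ext_min (fun t1 => NC Gs Xv gam Y t (F, t1)).

Definition NC_accessible (V : finType) (Gs : V -> V -> Prop) (n : nat)
  (Xv : 'I_n -> V) (gam : 'I_n -> nat) (Y : V) (t : Z)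
  (target f : vtx V) : Prop :=
  f <> target /\
  exists E, candidate Gs E /\
    exists l, chain E f l /\ last f l = target /\
      (forall v, List.In v (f :: l) -> v <> target -> NC Gs Xv gam Y t v).

Definition t_acc (V : finType) (Gs : V -> V -> Prop) (n : nat)
  (Xv : 'I_n -> V) (gam : 'I_n -> nat) (Y : V) (t : Z)
  (target : vtx V) (F : V) : extZ :=
  ext_max (fun t1 => NC_accessible Gs Xv gam Y t target (F, t1)).

(* Main.v *)
Require Import Defs.
From Stdlib Require Import ZArith.
From mathcomp Require Import all_boot.
From Stdlib Require Import Classical ClassicalEpsilon Lia.

Lemma Z_min_exists (P : Z -> Prop) L :
  (forall w, P w -> (L <= w)%Z) -> forall z, P z ->
  exists m, P m /\ forall w, P w -> (m <= w)%Z.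
Proof.
intros HL z Hz.
destruct (classic (exists m, P m /\ forall w, P w -> (m <= w)%Z)) as [H|H]; [exact H|exfalso].
assert (Hk : forall k : nat, forall w, P w -> (L + Z.of_nat k <= w)%Z).
{ induction k as [|k IHk]; intros w Hw.
  - specialize (HL w Hw); simpl; lia.
  - destruct (Z.eq_dec w (L + Z.of_nat k)) as [He|He].
    + exfalso; apply H; exists w; split; [exact Hw|]. intros w' Hw'.
      rewrite He; apply IHk; exact Hw'.
    + specialize (IHk w Hw); lia. }
specialize (Hk (S (Z.to_nat (z - L))) z Hz). specialize (HL z Hz).
rewrite Nat2Z.inj_succ Z2Nat.id in Hk; lia.
Qed.

Lemma ext_min_not_neg (P : Z -> Prop) L :
  (forall w, P w -> (L <= w)%Z) -> ext_min P <> NegInf.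
Proof.
intros HL. unfold ext_min.
destruct (excluded_middle_informative _) as [H|H]; [discriminate|].
destruct (excluded_middle_informative (exists z, P z)) as [[z Hz]|]; [|discriminate].
exfalso; apply H; eapply Z_min_exists; eauto.
Qed.

Lemma ext_max_neg (P : Z -> Prop) : ext_max P = NegInf -> ~ exists z, P z.
Proof.
unfold ext_max.
destruct (excluded_middle_informative _) as [H|H]; [discriminate|].
destruct (excluded_middle_informative (exists z, P z)); [discriminate|auto].
Qed.

Lemma min_le (P : Z -> Prop) z : P z ->
  match ext_min P with Fin m => (m <= z)%Z | NegInf => True | PosInf => False end.
Proof.
intros Hz. unfold ext_min.
destruct (excluded_middle_informative _) as [H|H].
- destruct (constructive_indefinite_description _ H) as [m [Pm Hm]]; simpl; apply Hm; auto.
- destruct (excluded_middle_informative (exists z, P z)) as [Hy|n0]; [exact I|exfalso; apply n0; eauto].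
Qed.

Lemma max_ge (P : Z -> Prop) z : P z ->
  match ext_max P with Fin m => (z <= m)%Z | NegInf => False | PosInf => True end.
Proof.
intros Hz. unfold ext_max.
destruct (excluded_middle_informative _) as [H|H].
- destruct (constructive_indefinite_description _ H) as [m [Pm Hm]]; simpl; apply Hm; auto.
- destruct (excluded_middle_informative (exists z, P z)) as [Hy|n0]; [exact I|exfalso; apply n0; eauto].
Qed.

Lemma chain_time (A : Type) (R : (A * Z) -> (A * Z) -> Prop) :
  (forall u v, R u v -> (u.2 <= v.2)%Z) ->
  forall x l, chain R x l -> forall w, List.In w (x :: l) -> (x.2 <= w.2)%Z.
Proof.
intros HR x l; revert x; induction l as [|y l IH]; simpl; intros x Hc w Hw.
- destruct Hw as [<-|[]]; lia.
- destruct Hc as [Hxy Hc]. destruct Hw as [<-|Hw]; [lia|].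
  specialize (IH y Hc w Hw); specialize (HR _ _ Hxy); lia.
Qed.

Lemma last_in (A : Type) (x : A) l : List.In (last x l) (x :: l).
Proof.
revert x; induction l as [|y l IH]; intros x; simpl; [left; auto|].
right; apply IH.
Qed.

Lemma chain_impl (A : Type) (R R' : A -> A -> Prop) :
  (forall u v, R u v -> R' u v) -> forall x l, chain R x l -> chain R' x l.
Proof.
intros HR x l; revert x; induction l as [|y l IH]; simpl; auto.
intros x [H1 H2]; split; auto.
Qed.

Lemma ftcg_mono (V : finType) (E : vtx V -> vtx V -> Prop) :
  is_FTCG E -> forall u v, E u v -> (u.2 <= v.2)%Z.
Proof.
intros [Ht _] [a s] [b s'] H; simpl; eapply Ht; eauto.
Qed.

Arguments chain_time {A R} _ {x l} _ {w} _.
Arguments last_in {A}.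
Arguments chain_impl {A R R'} _ {x l} _.
Arguments ftcg_mono {V E}.
Arguments min_le {P z}.
Arguments max_ge {P z}.

Lemma shift (V : finType) (Gs : V -> V -> Prop) (n : nat) (Xv : 'I_n -> V)
  (gam : 'I_n -> nat) (Y : V) (t : Z) (T : vtx V) (F : V) (t1 m : Z) :
  NC_accessible Gs Xv gam Y t T (F, t1) -> (m <= t1)%Z ->
  NC Gs Xv gam Y t (F, m) -> NC_accessible Gs Xv gam Y t T (F, m).
Proof.
intros Hacc Hm HF.
destruct (Z.eq_dec m t1) as [->|Hlt]; [exact Hacc|].
destruct Hacc as [Hne [E [[[Htime Hacyc] Hred] [l [Hc [Hl Hnc]]]]]].
assert (Hmono : forall u v, E u v -> (u.2 <= v.2)%Z).
{ apply ftcg_mono; split; auto. }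
destruct l as [|[W s] l'].
{ simpl in Hl; contradiction. }
assert (HT : (t1 <= T.2)%Z).
{ pose proof (chain_time Hmono Hc (last_in (F, t1) ((W, s) :: l'))) as H.
  rewrite Hl in H; exact H. }
simpl in Hc. destruct Hc as [HFW Hc].
assert (Hts : (t1 <= s)%Z) by (eapply Htime; eauto).
set E' := fun u v => E u v \/ (u = (F, m) /\ v = (W, s)).
assert (Hmono' : forall u v, E' u v -> (u.2 <= v.2)%Z).
{ intros u v [H|[-> ->]]; [auto|simpl; lia]. }
split.
{ intro Heq; rewrite <- Heq in HT; simpl in HT; lia. }
exists E'. split; [split; [split|]|].
- intros X0 s0 W0 s0' [H|[H1 H2]]; [eapply Htime; eauto|].
  injection H1 as -> ->; injection H2 as -> ->; lia.
- intros x l0 Hc0 Hnil Hlast.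
  assert (Key : forall x l, chain E' x l -> chain E x l \/ (x.2 < (last x l).2)%Z).
  { intros x1 l1; revert x1; induction l1 as [|y l1 IH]; simpl; intros x1 Hc1; [left; auto|].
    destruct Hc1 as [Hxy Hc1].
    pose proof (chain_time Hmono' Hc1 (last_in y l1)) as Hyl.
    destruct Hxy as [Hxy|[-> ->]].
    - destruct (IH y Hc1) as [H|H]; [left; split; auto|right].
      specialize (Hmono _ _ Hxy); lia.
    - right; simpl in Hyl |- *; lia. }
  destruct (Key x l0 Hc0) as [H|H].
  + exact (Hacyc x l0 H Hnil Hlast).
  + rewrite Hlast in H; lia.
- intros X0 W0; split.
  + intro H; apply Hred in H; destruct H as [s0 [g [Hg H]]]; exists s0, g; split; auto; left; auto.
  + intros [s0 [g [Hg [H|[H1 H2]]]]]; [apply Hred; eauto|].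
    injection H1 as -> Hm1; injection H2 as -> ->.
    apply Hred. exists s, (s - t1)%Z. split; [lia|].
    replace (s - (s - t1))%Z with t1 by lia. exact HFW.
- exists ((W, s) :: l'). split; [|split].
  + simpl; split; [right; auto|]. apply (chain_impl (R:=E)); [|exact Hc].
    intros u v H; left; exact H.
  + simpl in Hl |- *; exact Hl.
  + intros v Hv HvT. destruct Hv as [<-|Hv]; [exact HF|].
    apply Hnc; [right; exact Hv|exact HvT].
Qed.

Lemma NC_lb (V : finType) (Gs : V -> V -> Prop) (n : nat) (Xv : 'I_n -> V)
  (gam : 'I_n -> nat) (Y : V) (t : Z) (F : V) (t1 : Z) :
  NC Gs Xv gam Y t (F, t1) -> (t - Z.of_nat (\max_(j < n) gam j) <= t1)%Z.
Proof.
intros [[E [HE [w [_ [Hop [l2 [Hc2 Hl2]]]]]]] _].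
destruct Hop as [a [l [[j Ha] [Hc [_ [_ Hw]]]]]].
assert (Hmono : forall u v, E u v -> (u.2 <= v.2)%Z) by (apply ftcg_mono; apply HE).
pose proof (chain_time Hmono Hc Hw) as h1.
pose proof (chain_time Hmono Hc2 (last_in w l2)) as h2. rewrite Hl2 in h2.
subst a. unfold interv in h1; simpl in h1, h2.
have hj : (gam j <= \max_(j < n) gam j)%N := leq_bigmax j.
move/leP: hj => hj. apply Nat2Z.inj_le in hj. lia.
Qed.

Arguments shift {V Gs n Xv gam Y t T F t1 m}.
Arguments NC_lb {V Gs n Xv gam Y t F t1}.
Arguments Z_min_exists {P L}.

Theorem corollary1 (V : finType) (Gs : V -> V -> Prop) (Y : V) (t : Z)
  (n : nat) (Xv : 'I_n -> V) (gam : 'I_n -> nat)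
  (hSCG : is_SCG Gs)
  (hdistinct : injective (interv Xv gam t))
  (hdesc : forall i, descendant Gs (Xv i) Y)
  (F : V) (i : 'I_n) :
  (exists tf : Z,
      NC_accessible Gs Xv gam Y t (interv Xv gam t i) (F, tf) /\
      NC_accessible Gs Xv gam Y t (Y, t) (F, tf))
  <->
  (extZ_le (t_NC Gs Xv gam Y t F) (t_acc Gs Xv gam Y t (interv Xv gam t i) F) /\
   extZ_le (t_NC Gs Xv gam Y t F) (t_acc Gs Xv gam Y t (Y, t) F)).
Proof.
assert (AccNC : forall T t1, NC_accessible Gs Xv gam Y t T (F, t1) -> NC Gs Xv gam Y t (F, t1)).
{ intros T t1 [Hne [E [_ [l [_ [_ Hnc]]]]]]; apply Hnc; [left; auto|auto]. }
split.
- intros [tf [HX HY]].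
  pose proof (min_le (P := fun t1 => NC Gs Xv gam Y t (F, t1)) (AccNC _ _ HX)) as H1.
  pose proof (max_ge (P := fun t1 => NC_accessible Gs Xv gam Y t (interv Xv gam t i) (F, t1)) HX) as H2.
  pose proof (max_ge (P := fun t1 => NC_accessible Gs Xv gam Y t (Y, t) (F, t1)) HY) as H3.
  unfold t_NC, t_acc.
  destruct (ext_min (fun t1 => NC Gs Xv gam Y t (F, t1)));
  destruct (ext_max (fun t1 => NC_accessible Gs Xv gam Y t (interv Xv gam t i) (F, t1)));
  destruct (ext_max (fun t1 => NC_accessible Gs Xv gam Y t (Y, t) (F, t1)));
  simpl in *; split; try tauto; lia.
- intros [H1 H2].
  assert (Hnn : t_NC Gs Xv gam Y t F <> NegInf).
  { unfold t_NC; eapply ext_min_not_neg; intros w Hw; eapply NC_lb; exact Hw. }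
  assert (Ex : forall T, extZ_le (t_NC Gs Xv gam Y t F) (t_acc Gs Xv gam Y t T F) ->
            exists z, NC_accessible Gs Xv gam Y t T (F, z)).
  { intros T H. apply NNPP; intro Hn.
    assert (Heq : t_acc Gs Xv gam Y t T F = NegInf).
    { unfold t_acc, ext_max.
      destruct (excluded_middle_informative _) as [[z [Hz Hz2]]|Hno]; [exfalso; eauto|].
      destruct (excluded_middle_informative _) as [Hz|]; [exfalso; auto|reflexivity]. }
    rewrite Heq in H. destruct (t_NC Gs Xv gam Y t F); simpl in H; tauto. }
  destruct (Ex _ H1) as [t1 Ht1]. destruct (Ex _ H2) as [t2 Ht2].
  destruct (Z_min_exists (P := fun z => NC Gs Xv gam Y t (F, z))
              (fun w Hw => NC_lb Hw) _ (AccNC _ _ Ht1)) as [m [Hm Hmin]].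
  exists m; split.
  + eapply shift; [exact Ht1| apply Hmin, (AccNC _ _ Ht1) | exact Hm].
  + eapply shift; [exact Ht2| apply Hmin, (AccNC _ _ Ht2) | exact Hm].
Qed.
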